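(* Let $n>0$, $c>1$, and $\tau=\min\{n/2,\ n/c\}$. Consider the following algorithm, executed by each agent: drop a pebble at the initial position, then walk clockwise while measuring the distance travelled; the first time (after time $0$) the agent arrives at a point carrying a pebble, if the distance it has travelled so far is strictly less than $\tau$, it reverses direction and walks anti-clockwise forever; otherwise it continues clockwise forever. In the pebble model, for every initial placement of the two agents, this algorithm achieves rendezvous by time $\max\left\{\frac{n}{2(c-1)},\ \frac{n}{c}\right\}$. In particular, each agent uses only one pebble, dropped once at its initial position.
   Context: Model: the cycle is the continuous circle $\mathbb{R}/n\mathbb{Z}$ of length $n$; it is anonymous. Two agents $A$ and $B$ are placed by an adversary at arbitrary initial points and start at the same time. Both run the same deterministic algorithm; they are identical except that the slower agent $B$ has speed $1$ and the faster agent $A$ has speed $c>1$ (an agent does not know which one it is). Both know $n$ and $c$, share a sense of direction (clockwise vs. anti-clockwise), and have a pedometer measuring the distance they have travelled. Agents detect each other when they are at the same point (rendezvous). Pebble model: an agent may drop a pebble at its current location and can detect whether a pebble lies at its current location (the pebbles of the two agents are indistinguishable). The rendezvous time of an algorithm is the worst case, over all initial placements, of the time until the agents are co-located. *)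

(* Defs.v *)
From Stdlib Require Import Reals.
Open Scope R_scope.

(* The cycle R/nZ: points are represented by real lifts; two lifts denote the
   same point of the cycle iff they differ by an integer multiple of n.
   Clockwise = increasing coordinate. *)
Definition same_point (n p q : R) : Prop := exists k : Z, p - q = IZR k * n.

Definition tau (n c : R) : R := Rmin (n / 2) (n / c).

(* Pebbles are dropped at time 0 at both initial positions x (own) and y
   (other agent's).  [first_pebble_dist n x y D] : walking clockwise from x,
   the first positive distance travelled at which the agent stands on a point
   carrying a pebble is D. *)
Definition has_pebble (n x y p : R) : Prop := same_point n p x \/ same_point n p y.

Definition first_pebble_dist (n x y D : R) : Prop :=
  0 < D /\ has_pebble n x y (x + D) /\
  (forall s, 0 < s < D -> ~ has_pebble n x y (x + s)).

(* Position (real lift) at time t >= 0 of an agent with speed v, starting at x,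
   running the algorithm, where D is its first-pebble distance: walk clockwise
   for distance D; if D < tau reverse and walk anti-clockwise forever, otherwise
   keep walking clockwise forever. *)
Definition algo_pos (n c v x D t : R) : R :=
  let s := v * t in
  if Rle_dec s D then x + s
  else if Rlt_dec D (tau n c) then x + D - (s - D)
  else x + s.

(* Main.v *)
Require Import Defs.
From Stdlib Require Import Reals Lra Lia.
Open Scope R_scope.

Lemma int_zero (z : Z) : -1 < IZR z -> IZR z <= 0 -> z = 0%Z.
Proof. intros h1 h2. apply lt_IZR in h1. apply le_IZR in h2. lia. Qed.
Lemma int_one (z : Z) : 0 < IZR z -> IZR z <= 1 -> z = 1%Z.
Proof. intros h1 h2. apply lt_IZR in h1. apply le_IZR in h2. lia. Qed.

Lemma fpd_eq n x y D e : 0 < n -> first_pebble_dist n x y D -> 0 < e <= n ->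
  same_point n (x + e) y -> D = e.
Proof.
  intros hn [hD [hp hm]] he hs.
  assert (hle : D <= e).
  { destruct (Rle_dec D e) as [h|h]; [exact h|].
    exfalso. apply (hm e); [lra| right; exact hs]. }
  destruct hp as [[k hk]|[k hk]].
  - assert (IZR k * n = D) by lra.
    assert (0 < IZR k) by (apply (Rmult_lt_reg_r n); lra).
    assert (IZR k <= 1) by (apply (Rmult_le_reg_r n); lra).
    assert (k = 1%Z) by (apply int_one; auto). subst k. simpl in *. lra.
  - destruct hs as [j hj].
    assert (IZR (k - j) * n = D - e) by (rewrite minus_IZR; lra).
    assert (-1 < IZR (k-j)) by (apply (Rmult_lt_reg_r n); lra).
    assert (IZR (k-j) <= 0) by (apply (Rmult_le_reg_r n); lra).
    assert (ez : (k - j = 0)%Z) by (apply int_zero; auto). rewrite ez in *. simpl in *. lra.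
Qed.

Lemma exists_d n a b : 0 < n -> exists d, 0 < d <= n /\ same_point n (a + d) b.
Proof.
  intros hn. destruct (archimed ((a - b)/n)) as [h1 h2].
  set (m := up ((a - b)/n)) in *.
  exists (b - a + IZR m * n). split.
  - assert (E : a - b = (a-b)/n * n) by (field; lra).
    split.
    + assert (0 < (IZR m - (a-b)/n) * n) by (apply Rmult_lt_0_compat; lra).
      ring_simplify in H. lra.
    + assert ((IZR m - (a-b)/n) * n <= 1 * n) by (apply Rmult_le_compat_r; lra).
      ring_simplify in H. lra.
  - exists m. lra.
Qed.

Lemma tau_cases n c : 0 < n -> 1 < c ->
  (tau n c = n/2 /\ c <= 2) \/ (tau n c = n/c /\ 2 <= c).
Proof.
  intros hn hc. unfold tau. set (q := n / c). assert (q * c = n) by (unfold q; field; lra).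
  destruct (Rle_dec c 2).
  - left. split; auto. apply Rmin_left. nra.
  - right. split; [|lra]. apply Rmin_right. nra.
Qed.

Lemma bound_rev n c t : 0 < n -> 1 < c -> (c+1)*t <= n + tau n c ->
  t <= Rmax (n/(2*(c-1))) (n/c).
Proof.
  intros hn hc ht.
  set (q := n / c). assert (q * c = n) by (unfold q; field; lra).
  set (h := n / (2*(c-1))). assert (2*(c-1)*h = n) by (unfold h; field; lra).
  destruct (tau_cases n c hn hc) as [[e hc2]|[e hc2]]; rewrite e in ht.
  - apply Rle_trans with h; [|apply Rmax_l].
    assert (0 < h) by nra. nra.
  - apply Rle_trans with q; [|apply Rmax_r].
    fold q in ht. nra.
Qed.

Lemma bound_fwd n c t d : 0 < n -> 1 < c -> (c-1)*t = d -> tau n c <= d <= n - tau n c ->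
  t <= Rmax (n/(2*(c-1))) (n/c).
Proof.
  intros hn hc ht hd.
  set (q := n / c). assert (q * c = n) by (unfold q; field; lra).
  set (h := n / (2*(c-1))). assert (2*(c-1)*h = n) by (unfold h; field; lra).
  destruct (tau_cases n c hn hc) as [[e hc2]|[e hc2]]; rewrite e in hd.
  - apply Rle_trans with h; [|apply Rmax_l].
    assert (0 < h) by nra. nra.
  - apply Rle_trans with q; [|apply Rmax_r].
    fold q in hd. nra.
Qed.

Theorem theorem3 (n c : R) (hn : 0 < n) (hc : 1 < c) (a b DA DB : R)
  (hA : first_pebble_dist n a b DA) (hB : first_pebble_dist n b a DB) :
  exists t : R,
    0 <= t <= Rmax (n / (2 * (c - 1))) (n / c) /\
    same_point n (algo_pos n c c a DA t) (algo_pos n c 1 b DB t).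
Proof.
  destruct (exists_d n a b hn) as [d [hd [k hk]]].
  pose proof (fpd_eq n a b DA d hn hA hd (ex_intro _ k hk)) as eA.
  assert (hmax : 0 <= Rmax (n / (2 * (c - 1))) (n / c)).
  { apply Rle_trans with (n/c); [|apply Rmax_r]. apply Rlt_le, Rdiv_lt_0_compat; lra. }
  destruct (Req_dec d n) as [dn|dn].
  { exists 0. split; [lra|]. unfold algo_pos.
    rewrite !Rmult_0_r. destruct (Rle_dec 0 DA); [|lra].
    destruct (Rle_dec 0 DB); [|destruct hB; lra].
    exists (k - 1)%Z. rewrite minus_IZR. simpl. lra. }
  assert (eB : DB = n - d).
  { apply (fpd_eq n b a DB (n - d) hn hB); [lra|].
    exists (1 - k)%Z. rewrite minus_IZR. simpl. lra. }
  subst DA DB.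
  assert (tau n c <= n/2) by apply Rmin_l.
  assert (tau n c <= n/c) by apply Rmin_r.
  assert (tau n c * c <= n).
  { apply Rle_trans with (n/c*c); [apply Rmult_le_compat_r; lra| right; field; lra]. }
  unfold algo_pos.
  destruct (Rlt_dec d (tau n c)) as [h1|h1].
  -
    set (t := (n + d)/(c+1)). assert (et : (c+1)*t = n + d) by (unfold t; field; lra).
    exists t. split; [split; [unfold t; apply Rlt_le, Rdiv_lt_0_compat; lra|]|].
    { apply bound_rev; lra. }
    destruct (Rle_dec (c*t) d); [nra|].
    destruct (Rle_dec (1*t) (n-d)).
    + exists (k-1)%Z. rewrite minus_IZR. simpl. lra.
    + destruct (Rlt_dec (n-d) (tau n c)); [lra|].
      exists (k-1)%Z. rewrite minus_IZR. simpl. lra.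
  - destruct (Rlt_dec (n - d) (tau n c)) as [h2|h2].
    + set (t := (2*n - d)/(c+1)). assert (et : (c+1)*t = 2*n - d) by (unfold t; field; lra).
      exists t. split; [split; [unfold t; apply Rlt_le, Rdiv_lt_0_compat; lra|]|].
      { apply bound_rev; lra. }
      destruct (Rle_dec (1*t) (n-d)); [nra|].
      destruct (Rle_dec (c*t) d).
      * exists k. lra.
      * exists k. lra.
    + set (t := d/(c-1)). assert (et : (c-1)*t = d) by (unfold t; field; lra).
      exists t. split; [split; [unfold t; apply Rlt_le, Rdiv_lt_0_compat; lra|]|].
      { apply (bound_fwd n c t d); lra. }
      assert (ha : c*t = t + d) by lra.
      destruct (Rle_dec (c*t) d); [nra|].
      destruct (Rle_dec (1*t) (n-d)).
      * exists k. lra.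
      * exists k. lra.
Qed.
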